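(* Let $n\geq 3$ and let $C_n^*$ be the bigraded complex described in the context. Let $\phi\colon C_n^*\to C_n^*$ be an $R$-linear chain map that is homogeneous of bigrading $(c_1,c_2)$, where $c_1>-2n$ and $c_2>-2n$. Then $\phi(\alpha_n^* )$ is either $0$ or of the form $c\,\alpha_n^*$ for some $c\in\mathbb{F}[\mathcal{U},\mathcal{V}]$.
   Context: Let $\mathbb{F}=\mathbb{Z}/2$ and $R=\mathbb{F}[\mathcal{U},\mathcal{V}]$, bigraded by $(\operatorname{gr}_{\mathcal{U}},\operatorname{gr}_{\mathcal{V}})$ with $\mathcal{U}$ of bigrading $(-2,0)$ and $\mathcal{V}$ of bigrading $(0,-2)$. For $n\geq 3$, $C_n^*$ is the free $R$-module with basis $\alpha^*_s$ ($1\leq s\leq 2n-1$); $\widetilde{\alpha}^*_s$ ($1\leq s\leq n-2$ and $n+1\leq s\leq 2n-2$); $b^{*,(s)}_{n-1}$ ($1\leq s\leq n-2$); $b^{*,(s)}_{n}$ ($1\leq s\leq 2n-2$); $b^{*,(s)}_{n+1}$ ($n+1\leq s\leq 2n-2$), with $R$-linear differential $\partial$ given by $\partial\alpha^*_s=0$, $\partial\widetilde{\alpha}^*_s=0$, and $\partial b^{*,(s)}_{n-1}=\mathcal{U}^{n(n-1)/2}\mathcal{V}^{n(n-1)/2}\alpha^*_s+\mathcal{V}^{n-s-1}\widetilde{\alpha}^*_s$ for $1\leq s\leq n-2$; $\partial b^{*,(s)}_{n}=\mathcal{U}^{n(n+1)/2-s}\mathcal{V}^{n(n+1)/2}\alpha^*_{s+1}+\mathcal{U}^{n}\widetilde{\alpha}^*_s$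 for $1\leq s\leq n-2$; $\partial b^{*,(s)}_{n}=\mathcal{U}^{n(n+1)/2}\mathcal{V}^{n(n-1)/2-n+s+1}\alpha^*_s+\mathcal{U}^{n(n+1)/2-s}\mathcal{V}^{n(n+1)/2}\alpha^*_{s+1}$ for $n-1\leq s\leq n$; $\partial b^{*,(s)}_{n}=\mathcal{U}^{n(n+1)/2}\mathcal{V}^{n(n-1)/2-n+s+1}\alpha^*_s+\mathcal{V}^{n}\widetilde{\alpha}^*_s$ for $n+1\leq s\leq 2n-2$; $\partial b^{*,(s)}_{n+1}=\mathcal{U}^{n(n-1)/2}\mathcal{V}^{n(n-1)/2}\alpha^*_{s+1}+\mathcal{U}^{s-n}\widetilde{\alpha}^*_s$ for $n+1\leq s\leq 2n-2$. The basis elements are assigned bigradings so that $\partial$ is homogeneous of bigrading $(-1,-1)$ (unique up to an overall shift; any such choice is fixed). A map is homogeneous of bigrading $(c_1,c_2)$ if it sends homogeneous elements of bigrading $(a,b)$ to homogeneous elements of bigrading $(a+c_1,b+c_2)$. *)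

(* Defs.v *)
From HB Require Import structures.
From mathcomp Require Import all_boot all_order all_algebra.
Unset Printing Implicit Defensive.
Import Order.TTheory GRing.Theory Num.Theory.
Local Open Scope ring_scope.

(* The ground ring R = F[U,V] with F = Z/2, realised as {poly {poly 'F_2}}:
   the outer variable is U, the inner variable is V.  The coefficient of
   U^i V^j in p : R is ((p`_i)`_j). *)
Notation R := {poly {poly 'F_2}}.
Definition U : R := 'X.
Definition V : R := ('X)%:P.

Definition Ka  : 'I_5 := @Ordinal 5 0 isT.
Definition Kt  : 'I_5 := @Ordinal 5 1 isT.
Definition Kb1 : 'I_5 := @Ordinal 5 2 isT.  (* b^{*,(s)}_{n-1}      *)
Definition Kb2 : 'I_5 := @Ordinal 5 3 isT.  (* b^{*,(s)}_{n}        *)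
Definition Kb3 : 'I_5 := @Ordinal 5 4 isT.  (* b^{*,(s)}_{n+1}      *)

Definition valid (n : nat) (p : 'I_5 * 'I_(2 * n)) : bool :=
  let k := p.1 in let s := val p.2 in
  if k == Ka then (1 <= s <= 2 * n - 1)%N
  else if k == Kt then ((1 <= s <= n - 2) || (n + 1 <= s <= 2 * n - 2))%N
  else if k == Kb1 then (1 <= s <= n - 2)%N
  else if k == Kb2 then (1 <= s <= 2 * n - 2)%N
  else (n + 1 <= s <= 2 * n - 2)%N.

Definition basis (n : nat) : finType := {p : 'I_5 * 'I_(2 * n) | valid n p}.

Notation Cn n := {ffun basis n -> R}.

(* The basis vector of kind k and index s (zero if (k,s) is not valid). *)
Definition bvec (n : nat) (k : 'I_5) (s : nat) : Cn n :=
  [ffun e : basis n => ((((val e).1 == k) && (val (val e).2 == s)))%:R].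

Definition rscale (n : nat) (c : R) (x : Cn n) : Cn n := [ffun e => c * x e].

Definition alpha  n s := bvec n Ka s.
Definition talpha n s := bvec n Kt s.

Definition N1 (n : nat) : nat := (n * (n - 1)) %/ 2.
Definition N2 (n : nat) : nat := (n * (n + 1)) %/ 2.

Definition dbasis (n : nat) (e : basis n) : Cn n :=
  let k := (val e).1 in let s := val (val e).2 in
  if k == Kb1 then
    rscale n (U ^+ N1 n * V ^+ N1 n) (alpha n s) + rscale n (V ^+ (n - s - 1)) (talpha n s)
  else if k == Kb2 then
    (if (s <= n - 2)%N then
       rscale n (U ^+ (N2 n - s) * V ^+ N2 n) (alpha n s.+1) + rscale n (U ^+ n) (talpha n s)
     else if (s <= n)%N then
       rscale n (U ^+ N2 n * V ^+ (N1 n + s + 1 - n)) (alpha n s)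
         + rscale n (U ^+ (N2 n - s) * V ^+ N2 n) (alpha n s.+1)
     else
       rscale n (U ^+ N2 n * V ^+ (N1 n + s + 1 - n)) (alpha n s) + rscale n (V ^+ n) (talpha n s))
  else if k == Kb3 then
    rscale n (U ^+ N1 n * V ^+ N1 n) (alpha n s.+1) + rscale n (U ^+ (s - n)) (talpha n s)
  else 0.

Definition d (n : nat) (x : Cn n) : Cn n := \sum_(e : basis n) rscale n (x e) (dbasis n e).

(* Bigrading: gr e = (gr_U, gr_V) of basis element e; U^i V^j e has
   bigrading (gr_U e - 2 i, gr_V e - 2 j).  x is homogeneous of bigrading
   (a,b) iff every monomial U^i V^j e occurring in x has bigrading (a,b). *)
Definition homog (n : nat) (gr : basis n -> int * int) (a b : int) (x : Cn n) : Prop :=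
  forall (e : basis n) (i j : nat), ((x e)`_i)`_j != 0 ->
    (gr e).1 - 2 * (i%:Z) = a /\ (gr e).2 - 2 * (j%:Z) = b.

Definition homog_map (n : nat) (gr : basis n -> int * int) (c1 c2 : int)
  (f : Cn n -> Cn n) : Prop :=
  forall (a b : int) (x : Cn n), homog n gr a b x -> homog n gr (a + c1) (b + c2) (f x).

(* Main.v *)
Require Import Defs.
From HB Require Import structures.
From mathcomp Require Import all_boot all_order all_algebra zify.
Import Order.TTheory GRing.Theory Num.Theory.
Local Open Scope ring_scope.

Lemma bvec_self n (eb e : basis n) :
  bvec n (val eb).1 (val (val eb).2) e = (e == eb)%:R.
Proof. by rewrite ffunE; congr (_%:R). Qed.

Lemma homog_bvec n gr (eb : basis n) :
  homog n gr (gr eb).1 (gr eb).2 (bvec n (val eb).1 (val (val eb).2)).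
Proof.
move=> e i j; rewrite bvec_self.
have [-> | _] := eqVneq e eb; last by rewrite /= coef0 coef0 eqxx.
rewrite /= coef1; case: i => [|i]; last by rewrite coef0 eqxx.
rewrite /= coef1; case: j => [|j] //= _.
by rewrite !mulr0 !subr0.
Qed.

Lemma rscale1 n (x : Cn n) : rscale n 1 x = x.
Proof. by apply/ffunP => e; rewrite ffunE mul1r. Qed.
Lemma rscale0 n (x : Cn n) : rscale n 0 x = 0.
Proof. by apply/ffunP => e; rewrite !ffunE mul0r. Qed.

Lemma d_bvec n (eb : basis n) : d n (bvec n (val eb).1 (val (val eb).2)) = dbasis n eb.
Proof.
rewrite /d (bigD1 eb) //= big1 ?addr0.
  by rewrite bvec_self eqxx rscale1.
by move=> e /negbTE ne; rewrite bvec_self ne rscale0.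
Qed.

Lemma edge n gr (hgr : homog_map n gr (-1) (-1) (d n)) (eb et : basis n) p q :
  ((dbasis n eb et)`_p)`_q != 0 ->
  (gr et).1 - 2 * p%:Z = (gr eb).1 + -1 /\ (gr et).2 - 2 * q%:Z = (gr eb).2 + -1.
Proof.
move=> h; have := hgr _ _ _ (homog_bvec n gr eb).
by rewrite d_bvec => /(_ et p q h).
Qed.

Lemma coefUV p q : ((U ^+ p * V ^+ q)`_p)`_q = 1.
Proof.
by rewrite /U /V -rmorphXn mulrC coefCM coefXn eqxx mulr1 coefXn eqxx.
Qed.

Definition GR n (gr : basis n -> int * int) k s : int * int :=
  if [pick e : basis n | ((val e).1 == k) && (val (val e).2 == s)] is Some e then gr e else (0,0).

Lemma GRE n gr (e : basis n) k s : (val e).1 = k -> val (val e).2 = s -> GR n gr k s = gr e.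
Proof.
move=> <- <-; rewrite /GR; case: pickP => [e' h | /(_ e)]; last by rewrite !eqxx.
move/andP: h => [/eqP h1 /eqP h2].
case: e' h1 h2 => [[k1 o1] p1]; case: e => [[k2 o2] p2] /= h1 h2.
by congr gr; apply: val_inj => /=; rewrite h1; congr pair; apply: val_inj.
Qed.

Lemma exist_el n (k : 'I_5) s (Hs : (s < 2 * n)%N) :
  valid n (k, Ordinal Hs) -> exists e : basis n, (val e).1 = k /\ val (val e).2 = s.
Proof. by move=> Hv; exists (Sub (k, Ordinal Hs) Hv). Qed.

Lemma N12 n : (3 <= n)%N -> N2 n = (N1 n + n)%N /\ (3 <= N1 n)%N.
Proof. rewrite /N1 /N2 => h. nia. Qed.
Ltac finA h3 h4 := rewrite !ffunE /= h3 h4 !eqxx /= mulr1 mulr0 addr0 //.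
Ltac finT h3 h4 := rewrite !ffunE /= h3 h4 !eqxx /= mulr0 add0r mulr1 //.

Opaque N1 N2.
Lemma dA n (eb et : basis n) s : 
  (val eb).1 = Kb1 -> val (val eb).2 = s -> (val et).1 = Ka -> val (val et).2 = s ->
  dbasis n eb et = U ^+ N1 n * V ^+ N1 n.
Proof. move=> h1 h2 h3 h4; rewrite /dbasis h1 h2 /=; finA h3 h4. Qed.
Lemma dB n (eb et : basis n) s : 
  (val eb).1 = Kb1 -> val (val eb).2 = s -> (val et).1 = Kt -> val (val et).2 = s ->
  dbasis n eb et = U ^+ 0 * V ^+ (n - s - 1).
Proof. move=> h1 h2 h3 h4; rewrite expr0 mul1r; rewrite /dbasis h1 h2 /=; finT h3 h4. Qed.
Lemma dC n (eb et : basis n) s : (s <= n - 2)%N ->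
  (val eb).1 = Kb2 -> val (val eb).2 = s -> (val et).1 = Ka -> val (val et).2 = s.+1 ->
  dbasis n eb et = U ^+ (N2 n - s) * V ^+ N2 n.
Proof. move=> hs h1 h2 h3 h4; rewrite /dbasis h1 h2 /= hs; finA h3 h4. Qed.
Lemma dD n (eb et : basis n) s : (s <= n - 2)%N ->
  (val eb).1 = Kb2 -> val (val eb).2 = s -> (val et).1 = Kt -> val (val et).2 = s ->
  dbasis n eb et = U ^+ n * V ^+ 0.
Proof. move=> hs h1 h2 h3 h4; rewrite expr0 mulr1; rewrite /dbasis h1 h2 /= hs; finT h3 h4. Qed.
Lemma dE n (eb et : basis n) s : (n - 2 < s <= n)%N ->
  (val eb).1 = Kb2 -> val (val eb).2 = s -> (val et).1 = Ka -> val (val et).2 = s ->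
  dbasis n eb et = U ^+ N2 n * V ^+ (N1 n + s + 1 - n).
Proof.
move=> /andP[hs hs'] h1 h2 h3 h4; rewrite /dbasis h1 h2 /= leqNgt hs /= hs' !ffunE /= h3 h4 (ltn_eqF (ltnSn s)) !eqxx /= mulr1 mulr0 addr0 //.
Qed.
Lemma dF n (eb et : basis n) s : (n - 2 < s <= n)%N ->
  (val eb).1 = Kb2 -> val (val eb).2 = s -> (val et).1 = Ka -> val (val et).2 = s.+1 ->
  dbasis n eb et = U ^+ (N2 n - s) * V ^+ N2 n.
Proof.
move=> /andP[hs hs'] h1 h2 h3 h4; rewrite /dbasis h1 h2 /= leqNgt hs /= hs' !ffunE /= h3 h4 (gtn_eqF (ltnSn s)) !eqxx /= mulr0 add0r mulr1 //.
Qed.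
Lemma dG n (eb et : basis n) s : (n < s)%N ->
  (val eb).1 = Kb2 -> val (val eb).2 = s -> (val et).1 = Ka -> val (val et).2 = s ->
  dbasis n eb et = U ^+ N2 n * V ^+ (N1 n + s + 1 - n).
Proof.
move=> hs h1 h2 h3 h4; rewrite /dbasis h1 h2 /=.
have -> : (s <= n - 2)%N = false by apply/negbTE; rewrite -ltnNge; lia.
have -> : (s <= n)%N = false by apply/negbTE; rewrite -ltnNge; lia.
finA h3 h4.
Qed.
Lemma dH n (eb et : basis n) s : (n < s)%N ->
  (val eb).1 = Kb2 -> val (val eb).2 = s -> (val et).1 = Kt -> val (val et).2 = s ->
  dbasis n eb et = U ^+ 0 * V ^+ n.
Proof.
move=> hs h1 h2 h3 h4; rewrite expr0 mul1r; rewrite /dbasis h1 h2 /=.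
have -> : (s <= n - 2)%N = false by apply/negbTE; rewrite -ltnNge; lia.
have -> : (s <= n)%N = false by apply/negbTE; rewrite -ltnNge; lia.
finT h3 h4.
Qed.
Lemma dI n (eb et : basis n) s : 
  (val eb).1 = Kb3 -> val (val eb).2 = s -> (val et).1 = Ka -> val (val et).2 = s.+1 ->
  dbasis n eb et = U ^+ N1 n * V ^+ N1 n.
Proof. move=> h1 h2 h3 h4; rewrite /dbasis h1 h2 /=; finA h3 h4. Qed.
Lemma dJ n (eb et : basis n) s : 
  (val eb).1 = Kb3 -> val (val eb).2 = s -> (val et).1 = Kt -> val (val et).2 = s ->
  dbasis n eb et = U ^+ (s - n) * V ^+ 0.
Proof. move=> h1 h2 h3 h4; rewrite expr0 mulr1; rewrite /dbasis h1 h2 /=; finT h3 h4. Qed.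

Lemma edgeGR n gr (hgr : homog_map n gr (-1) (-1) (d n)) kb sb kt st p q :
  (exists eb : basis n, (val eb).1 = kb /\ val (val eb).2 = sb) ->
  (exists et : basis n, (val et).1 = kt /\ val (val et).2 = st) ->
  (forall eb et : basis n, (val eb).1 = kb -> val (val eb).2 = sb ->
     (val et).1 = kt -> val (val et).2 = st -> dbasis n eb et = U ^+ p * V ^+ q) ->
  (GR n gr kt st).1 = (GR n gr kb sb).1 - 1 + 2 * p%:Z /\
  (GR n gr kt st).2 = (GR n gr kb sb).2 - 1 + 2 * q%:Z.
Proof.
move=> [eb [b1 b2]] [et [t1 t2]] hd.
rewrite (GRE n gr eb kb sb b1 b2) (GRE n gr et kt st t1 t2).
have := edge n gr hgr eb et p q; rewrite (hd _ _ b1 b2 t1 t2) coefUV oner_neq0.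
move=> /(_ isT) [h1 h2]; split; lia.
Qed.

Lemma exA n s : (1 <= s <= 2 * n - 1)%N -> exists e : basis n, (val e).1 = Ka /\ val (val e).2 = s.
Proof. move=> h; have Hs : (s < 2 * n)%N by lia. by apply: (exist_el n Ka s Hs). Qed.
Lemma exT n s : (n + 1 <= s <= 2 * n - 2)%N || (1 <= s <= n - 2)%N -> exists e : basis n, (val e).1 = Kt /\ val (val e).2 = s.
Proof. move=> h; have Hs : (s < 2 * n)%N by lia. apply: (exist_el n Kt s Hs); rewrite /valid /=. by rewrite orbC. Qed.
Lemma exB1 n s : (1 <= s <= n - 2)%N -> exists e : basis n, (val e).1 = Kb1 /\ val (val e).2 = s.
Proof. move=> h; have Hs : (s < 2 * n)%N by lia. by apply: (exist_el n Kb1 s Hs). Qed.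
Lemma exB2 n s : (1 <= s <= 2 * n - 2)%N -> exists e : basis n, (val e).1 = Kb2 /\ val (val e).2 = s.
Proof. move=> h; have Hs : (s < 2 * n)%N by lia. by apply: (exist_el n Kb2 s Hs). Qed.
Lemma exB3 n s : (n + 1 <= s <= 2 * n - 2)%N -> exists e : basis n, (val e).1 = Kb3 /\ val (val e).2 = s.
Proof. move=> h; have Hs : (s < 2 * n)%N by lia. by apply: (exist_el n Kb3 s Hs). Qed.

Notation G n gr k s := (GR n gr k s).

Lemma eA n gr (hgr : homog_map n gr (-1) (-1) (d n)) s : (1 <= s <= n - 2)%N ->
  (G n gr Ka s).2 = (G n gr Kb1 s).2 - 1 + 2 * (N1 n)%:Z.
Proof. move=> h; have [_ ->] := edgeGR n gr hgr Kb1 s Ka s (N1 n) (N1 n)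
  (exB1 n s h) (exA n s ltac:(lia)) (fun eb et h1 h2 h3 h4 => dA n eb et s h1 h2 h3 h4) => //. Qed.
Lemma eB n gr (hgr : homog_map n gr (-1) (-1) (d n)) s : (1 <= s <= n - 2)%N ->
  (G n gr Kt s).2 = (G n gr Kb1 s).2 - 1 + 2 * (n - s - 1)%:Z.
Proof. move=> h; have [_ ->] := edgeGR n gr hgr Kb1 s Kt s 0 (n - s - 1)
  (exB1 n s h) (exT n s ltac:(by rewrite h orbT)) (fun eb et h1 h2 h3 h4 => dB n eb et s h1 h2 h3 h4) => //. Qed.
Lemma eC n gr (hgr : homog_map n gr (-1) (-1) (d n)) s : (1 <= s <= n - 2)%N ->
  (G n gr Ka s.+1).2 = (G n gr Kb2 s).2 - 1 + 2 * (N2 n)%:Z.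
Proof. move=> h; have [_ ->] := edgeGR n gr hgr Kb2 s Ka s.+1 (N2 n - s) (N2 n)
  (exB2 n s ltac:(lia)) (exA n s.+1 ltac:(lia)) (fun eb et h1 h2 h3 h4 => dC n eb et s ltac:(lia) h1 h2 h3 h4) => //. Qed.
Lemma eD n gr (hgr : homog_map n gr (-1) (-1) (d n)) s : (1 <= s <= n - 2)%N ->
  (G n gr Kt s).2 = (G n gr Kb2 s).2 - 1.
Proof. move=> h; have [_ ->] := edgeGR n gr hgr Kb2 s Kt s n 0
  (exB2 n s ltac:(lia)) (exT n s ltac:(by rewrite h orbT)) (fun eb et h1 h2 h3 h4 => dD n eb et s ltac:(lia) h1 h2 h3 h4); lia. Qed.
Lemma eE n gr (hgr : homog_map n gr (-1) (-1) (d n)) s : (3 <= n)%N -> (n - 1 <= s <= n)%N ->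
  (G n gr Ka s).1 = (G n gr Kb2 s).1 - 1 + 2 * (N2 n)%:Z /\
  (G n gr Ka s).2 = (G n gr Kb2 s).2 - 1 + 2 * (N1 n + s + 1 - n)%:Z.
Proof. move=> hn h; exact (edgeGR n gr hgr Kb2 s Ka s (N2 n) (N1 n + s + 1 - n)
  (exB2 n s ltac:(lia)) (exA n s ltac:(lia)) (fun eb et h1 h2 h3 h4 => dE n eb et s ltac:(lia) h1 h2 h3 h4)). Qed.
Lemma eF n gr (hgr : homog_map n gr (-1) (-1) (d n)) s : (3 <= n)%N -> (n - 1 <= s <= n)%N ->
  (G n gr Ka s.+1).1 = (G n gr Kb2 s).1 - 1 + 2 * (N2 n - s)%:Z /\
  (G n gr Ka s.+1).2 = (G n gr Kb2 s).2 - 1 + 2 * (N2 n)%:Z.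
Proof. move=> hn h; exact (edgeGR n gr hgr Kb2 s Ka s.+1 (N2 n - s) (N2 n)
  (exB2 n s ltac:(lia)) (exA n s.+1 ltac:(lia)) (fun eb et h1 h2 h3 h4 => dF n eb et s ltac:(lia) h1 h2 h3 h4)). Qed.
Lemma eG n gr (hgr : homog_map n gr (-1) (-1) (d n)) s : (n + 1 <= s <= 2 * n - 2)%N ->
  (G n gr Ka s).1 = (G n gr Kb2 s).1 - 1 + 2 * (N2 n)%:Z.
Proof. move=> h; have [-> _] := edgeGR n gr hgr Kb2 s Ka s (N2 n) (N1 n + s + 1 - n)
  (exB2 n s ltac:(lia)) (exA n s ltac:(lia)) (fun eb et h1 h2 h3 h4 => dG n eb et s ltac:(lia) h1 h2 h3 h4) => //. Qed.
Lemma eH n gr (hgr : homog_map n gr (-1) (-1) (d n)) s : (n + 1 <= s <= 2 * n - 2)%N ->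
  (G n gr Kt s).1 = (G n gr Kb2 s).1 - 1.
Proof. move=> h; have [-> _] := edgeGR n gr hgr Kb2 s Kt s 0 n
  (exB2 n s ltac:(lia)) (exT n s ltac:(by rewrite h)) (fun eb et h1 h2 h3 h4 => dH n eb et s ltac:(lia) h1 h2 h3 h4); lia. Qed.
Lemma eI n gr (hgr : homog_map n gr (-1) (-1) (d n)) s : (n + 1 <= s <= 2 * n - 2)%N ->
  (G n gr Ka s.+1).1 = (G n gr Kb3 s).1 - 1 + 2 * (N1 n)%:Z.
Proof. move=> h; have [-> _] := edgeGR n gr hgr Kb3 s Ka s.+1 (N1 n) (N1 n)
  (exB3 n s h) (exA n s.+1 ltac:(lia)) (fun eb et h1 h2 h3 h4 => dI n eb et s h1 h2 h3 h4) => //. Qed.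
Lemma eJ n gr (hgr : homog_map n gr (-1) (-1) (d n)) s : (n + 1 <= s <= 2 * n - 2)%N ->
  (G n gr Kt s).1 = (G n gr Kb3 s).1 - 1 + 2 * (s - n)%:Z.
Proof. move=> h; have [-> _] := edgeGR n gr hgr Kb3 s Kt s (s - n) 0
  (exB3 n s h) (exT n s ltac:(by rewrite h)) (fun eb et h1 h2 h3 h4 => dJ n eb et s h1 h2 h3 h4) => //. Qed.

Lemma rightA n gr (hgr : homog_map n gr (-1) (-1) (d n)) (hn : (3 <= n)%N) k :
  (n + 1 + k <= 2 * n - 1)%N -> (G n gr Ka (n + 1 + k)%N).1 <= (G n gr Ka n).1 - 2 * n%:Z.
Proof.
have [h12 hN1] := N12 n hn.
elim: k => [|k IH] hk.
  have [e1 _] := eE n gr hgr n hn ltac:(lia).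
  have [f1 _] := eF n gr hgr n hn ltac:(lia).
  rewrite (_ : (n + 1 + 0)%N = n.+1); last by lia.
  rewrite f1 e1; lia.
set s := (n + 1 + k)%N in IH hk *.
have hs : (n + 1 <= s <= 2 * n - 2)%N by lia.
rewrite (_ : (n + 1 + k.+1)%N = s.+1); last by rewrite /s; lia.
have := eG n gr hgr s hs; have := eH n gr hgr s hs; have := eI n gr hgr s hs; have := eJ n gr hgr s hs.
have := IH ltac:(lia).
lia.
Qed.

Lemma leftA n gr (hgr : homog_map n gr (-1) (-1) (d n)) (hn : (3 <= n)%N) k :
  (k <= n - 2)%N -> (G n gr Ka (n - 1 - k)%N).2 <= (G n gr Ka n).2 - 2 * n%:Z.
Proof.
have [h12 hN1] := N12 n hn.
elim: k => [|k IH] hk.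
  have [_ e2] := eE n gr hgr (n - 1) hn ltac:(lia).
  have [_ f2] := eF n gr hgr (n - 1) hn ltac:(lia).
  rewrite (_ : (n - 1).+1 = n) in f2; last by lia.
  rewrite (_ : (n - 1 - 0)%N = (n - 1)%N); last by lia.
  rewrite f2 e2; lia.
set s := (n - 1 - k.+1)%N.
have hs : (1 <= s <= n - 2)%N by lia.
have e : s.+1 = (n - 1 - k)%N by lia.
have := eA n gr hgr s hs; have := eB n gr hgr s hs; have := eC n gr hgr s hs; have := eD n gr hgr s hs.
rewrite e.
have := IH ltac:(lia).
lia.
Qed.

Lemma leftL n gr (hgr : homog_map n gr (-1) (-1) (d n)) (hn : (3 <= n)%N) s :
  (1 <= s <= n - 1)%N -> (G n gr Ka s).2 <= (G n gr Ka n).2 - 2 * n%:Z.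
Proof.
move=> hs; have := leftA n gr hgr hn (n - 1 - s) ltac:(lia).
by rewrite (_ : (n - 1 - (n - 1 - s))%N = s); last by lia.
Qed.
Lemma leftL' n gr (hgr : homog_map n gr (-1) (-1) (d n)) (hn : (3 <= n)%N) s :
  (1 <= s <= n)%N -> (G n gr Ka s).2 <= (G n gr Ka n).2.
Proof.
move=> hs; have [->|ne] := eqVneq s n; first by [].
have := leftL n gr hgr hn s ltac:(lia); lia.
Qed.
Lemma rightL n gr (hgr : homog_map n gr (-1) (-1) (d n)) (hn : (3 <= n)%N) s :
  (n + 1 <= s <= 2 * n - 1)%N -> (G n gr Ka s).1 <= (G n gr Ka n).1 - 2 * n%:Z.
Proof.
move=> hs; have := rightA n gr hgr hn (s - n - 1) ltac:(lia).
by rewrite (_ : (n + 1 + (s - n - 1))%N = s); last by lia.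
Qed.
Lemma rightL' n gr (hgr : homog_map n gr (-1) (-1) (d n)) (hn : (3 <= n)%N) s :
  (n <= s <= 2 * n - 1)%N -> (G n gr Ka s).1 <= (G n gr Ka n).1.
Proof.
move=> hs; have [->|ne] := eqVneq s n; first by [].
have := rightL n gr hgr hn s ltac:(lia); lia.
Qed.

Lemma classify n gr (hgr : homog_map n gr (-1) (-1) (d n)) (hn : (3 <= n)%N) (e : basis n) :
  ~~ (((val e).1 == Ka) && (val (val e).2 == n)) ->
  (gr e).1 <= (G n gr Ka n).1 - 2 * n%:Z \/ (gr e).2 <= (G n gr Ka n).2 - 2 * n%:Z.
Proof.
have [h12 hN1] := N12 n hn.
rewrite -(GRE n gr e (val e).1 (val (val e).2)) //.
case: e => [[k o] /= Hv]; move: Hv; rewrite /valid /=.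
set s := val o.
case: k => [[|[|[|[|[|k]]]]] Hk] //=.
-
  move=> hs hne.
  have [lt|gt] : (s < n)%N \/ (n < s)%N by move: hne; rewrite /Ka; lia.
  + right; apply: leftL => //; lia.
  + left; apply: rightL => //; lia.
-
  have -> : Ordinal Hk = Kt by apply: val_inj.
  move=> /orP[hs|hs] _.
  + right; have := eD n gr hgr s hs; have := eC n gr hgr s hs.
    have := leftL' n gr hgr hn s.+1 ltac:(lia). lia.
  + left; have := eH n gr hgr s hs; have := eG n gr hgr s hs.
    have := rightL n gr hgr hn s ltac:(lia). lia.
-
  have -> : Ordinal Hk = Kb1 by apply: val_inj.
  move=> hs _; right; have := eA n gr hgr s hs.
  have := leftL n gr hgr hn s ltac:(lia). lia.
-
  have -> : Ordinal Hk = Kb2 by apply: val_inj.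
  move=> hs _.
  have [le|gt] := leqP s (n - 2).
  + right; have := eC n gr hgr s ltac:(lia).
    have := leftL' n gr hgr hn s.+1 ltac:(lia). lia.
  have [eq1|ne1] := eqVneq s (n - 1)%N.
  + right; have [_ f2] := eF n gr hgr s hn ltac:(lia).
    have := leftL' n gr hgr hn s.+1 ltac:(lia). lia.
  have [eq2|ne2] := eqVneq s n.
  + left; have [e1 _] := eE n gr hgr s hn ltac:(lia).
    rewrite eq2 in e1 *; lia.
  + left; have := eG n gr hgr s ltac:(lia).
    have := rightL' n gr hgr hn s ltac:(lia). lia.
-
  have -> : Ordinal Hk = Kb3 by apply: val_inj.
  move=> hs _; left; have := eI n gr hgr s hs.
  have := rightL n gr hgr hn s.+1 ltac:(lia). lia.
Qed.

Lemma el_uniq n (e e' : basis n) : (val e).1 = (val e').1 -> val (val e).2 = val (val e').2 -> e = e'.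
Proof.
case: e => [[k1 o1] p1]; case: e' => [[k2 o2] p2] /= h1 h2.
by apply: val_inj => /=; rewrite h1; congr pair; apply: val_inj.
Qed.

Theorem lemma2p9 (n : nat) (hn : (3 <= n)%N)
  (gr : basis n -> int * int)
  (hgr : homog_map n gr (-1) (-1) (d n))
  (phi : Cn n -> Cn n)
  (phi_lin : forall (c : R) (x y : Cn n), phi (rscale n c x + y) = rscale n c (phi x) + phi y)
  (phi_chain : forall x : Cn n, phi (d n x) = d n (phi x))
  (c1 c2 : int)
  (hphi : homog_map n gr c1 c2 phi)
  (hc1 : - (2 * n%:Z) < c1) (hc2 : - (2 * n%:Z) < c2) :
  phi (alpha n n) = 0 \/ exists c : R, phi (alpha n n) = rscale n c (alpha n n).
Proof.
have [en [en1 en2]] := exA n n ltac:(lia).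
have Ha : alpha n n = bvec n (val en).1 (val (val en).2) by rewrite en1 en2.
have hx : homog n gr ((gr en).1 + c1) ((gr en).2 + c2) (phi (alpha n n)).
  by rewrite Ha; apply: hphi; apply: homog_bvec.
right; exists (phi (alpha n n) en).
apply/ffunP => e; rewrite ffunE Ha bvec_self.
have [->|ne] := eqVneq e en; first by rewrite mulr1.
rewrite mulr0.
apply/polyP => i; apply/polyP => j; rewrite coef0 coef0.
apply/eqP; apply: contraT => hne.
rewrite Ha in hx.
have [h1 h2] := hx e i j hne.
have hc : ~~ (((val e).1 == Ka) && (val (val e).2 == n)).
  apply/negP => /andP[/eqP k1 /eqP k2]; move/eqP: ne; apply.
  by apply: el_uniq; [rewrite k1 en1 | rewrite k2 en2].
have := classify n gr hgr hn e hc; rewrite (GRE n gr en Ka n en1 en2).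
lia.
Qed.
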